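(* Let $d,n$ be positive integers and suppose $d\geq \xi n^2$ for some $\xi=\xi(n)\geq 2n^{-1}$. Then $$p_d(n)<3a^{2n}e^{\frac{125n}{\xi}}n^2e^n\frac{d^n}{n^n}\qquad\text{with } a=\max\{2e^{3.5}\xi^{-1},1\}.$$ In particular, if $\xi(n)\to\infty$ as $n\to\infty$, then $p_d(n)=e^n\frac{d^n}{n^n}e^{o(n)}$.
   Context: $\mathbb{Z}_+=\{0,1,2,\dots\}$. A set $S\subset\mathbb{Z}_+^d$ is a lower set if whenever $\mathbf{x}\in S$ and $\mathbf{x}'\in\mathbb{Z}_+^d$ satisfies $x'_i\leq x_i$ for all $i$, then $\mathbf{x}'\in S$. $p_d(n)$ denotes the number of lower sets in $\mathbb{Z}_+^d$ with exactly $n$ points. *)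

(* Defs.v *)
From mathcomp Require Import all_boot.
From mathcomp Require Import finmap.
From Stdlib Require Import Reals.

Set Implicit Arguments.
Unset Strict Implicit.
Unset Printing Implicit Defensive.

Local Open Scope fset_scope.

Definition point (d : nat) := (d.-tuple nat).

Definition lower_set (d : nat) (S : {fset point d}) : Prop :=
  forall x : point d, x \in S ->
  forall y : point d, (forall i : 'I_d, tnth y i <= tnth x i) -> y \in S.

(* is_pd d n k : k is the number of lower sets in Z_+^d with exactly n points,
   witnessed by a duplicate-free enumeration of exactly those sets.
   (Any lower set with n points is finite, so it is an fset.)  *)
Definition is_pd (d n k : nat) : Prop :=
  exists s : seq {fset point d},
    [/\ uniq s, size s = k &
        forall S : {fset point d}, S \in s <-> (lower_set S /\ #|` S| = n)].

(* Main.v *)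
Require Import Defs.
From mathcomp Require Import all_boot.
From mathcomp Require Import finmap.
From Stdlib Require Import Reals.
From Stdlib Require Import ClassicalEpsilon Lra.
From mathcomp Require Import zify.
From mathcomp Require Import ssrnat.

Set Implicit Arguments.
Unset Strict Implicit.
Unset Printing Implicit Defensive.


Section Pts.
Variable d' : nat.
Local Notation d := d'.+1.
Local Notation pt := (point d).

Definition psum (x : pt) := \sum_(i < d) tnth x i.
Definition ltp (x y : pt) :=
  (psum x < psum y) || ((psum x == psum y) && (choice.pickle x < choice.pickle y)).

Lemma ltp_irr x : ltp x x = false.
Proof. by rewrite /ltp ltnn eqxx ltnn. Qed.

Lemma ltp_trans x y z : ltp x y -> ltp y z -> ltp x z.
Proof.
rewrite /ltp => /orP[h1|/andP[/eqP e1 h1]] /orP[h2|/andP[/eqP e2 h2]].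
- by rewrite (ltn_trans h1 h2).
- by rewrite -e2 h1.
- by rewrite e1 h2.
- by rewrite e1 e2 eqxx (ltn_trans h1 h2) orbT.
Qed.

Lemma ltp_total x y : x != y -> ltp x y || ltp y x.
Proof.
move=> nxy; rewrite /ltp.
case: (ltngtP (psum x) (psum y)) => //= e.
rewrite ?e ?eqxx /=.
case: (ltngtP (choice.pickle x) (choice.pickle y)) => // /(pcan_inj (@choice.pickleK _)) exy.
by rewrite exy eqxx in nxy.
Qed.

Definition zero : pt := [tuple 0 | _ < d].

Lemma psum_eq0 x : psum x = 0 -> x = zero.
Proof.
move=> /eqP; rewrite /psum sum_nat_eq0 => /forallP h.
apply: eq_from_tnth => i; rewrite tnth_mktuple.
by apply/eqP; have := h i.
Qed.

Lemma ltp_zero w : ltp w zero = false.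
Proof.
rewrite /ltp.
have -> : psum zero = 0 by rewrite /psum big1 // => i _; rewrite tnth_mktuple.
rewrite ltn0 /=; apply/negP => /andP[/eqP /psum_eq0 -> ]; by rewrite ltnn.
Qed.

Definition fnz (x : pt) : 'I_d := odflt ord0 [pick i | tnth x i != 0].

Lemma fnzP x : x != zero -> tnth x (fnz x) != 0.
Proof.
rewrite /fnz; case: pickP => [i -> //|h] /= nx.
case/eqP: nx; apply: eq_from_tnth => i; rewrite tnth_mktuple.
by apply/eqP; have := h i => /= /negbFE.
Qed.

Definition par (x : pt) : pt := [tuple tnth x j - (j == fnz x) | j < d].

Lemma par_le x i : tnth (par x) i <= tnth x i.
Proof. by rewrite tnth_mktuple leq_subr. Qed.

Lemma par_rec x j : x != zero -> tnth x j = tnth (par x) j + (j == fnz x).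
Proof.
move=> nx; rewrite tnth_mktuple; case: eqP => [->|_]; last by rewrite !subn0 addn0.
by rewrite subnK // lt0n fnzP.
Qed.

Lemma psum_par x : x != zero -> psum x = (psum (par x)).+1.
Proof.
move=> nx; rewrite /psum (bigD1 (fnz x)) //= [in RHS](bigD1 (fnz x)) //=.
rewrite (par_rec (fnz x) nx) eqxx addn1 addSn; congr (_ + _).+1.
by apply: eq_bigr => j /negPf hj; rewrite (par_rec j nx) hj addn0.
Qed.

Lemma ltp_par x : x != zero -> ltp (par x) x.
Proof. by move=> nx; rewrite /ltp (psum_par nx) ltnSn. Qed.

Lemma par_inj x y : x != zero -> y != zero -> par x = par y -> fnz x = fnz y -> x = y.
Proof.
move=> nx ny ep ef; apply: eq_from_tnth => j.
by rewrite (par_rec j nx) (par_rec j ny) ep ef.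
Qed.

End Pts.

Section Code.
Variables d' n' : nat.
Local Notation d := d'.+1.
Local Notation n := n'.+1.
Local Notation pt := (point d).
Local Open Scope fset_scope.

Definition rank (S : {fset pt}) (y : pt) := #|` [fset w in S | ltp w y]|.

Lemma rank_lt S y : y \in S -> rank S y < #|` S|.
Proof.
move=> yS; rewrite (cardfsD1 y S) yS add1n ltnS /rank.
apply: fsubset_leq_card; apply/fsubsetP => w; rewrite !inE.
case/andP => wS lw; rewrite wS andbT; apply/eqP => ewy.
by rewrite ewy ltp_irr in lw.
Qed.

Lemma rank_zero S : rank S (zero d') = 0.
Proof.
apply/eqP; rewrite cardfs_eq0; apply/eqP/fsetP => w.
by rewrite !inE ltp_zero andbF.
Qed.

Lemma rank_mono S y1 y2 : y1 \in S -> ltp y1 y2 -> rank S y1 < rank S y2.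
Proof.
move=> y1S l12; apply: fproper_ltn_card; rewrite fproperE; apply/andP; split.
  apply/fsubsetP => w; rewrite !inE => /andP[-> lw] /=.
  exact: ltp_trans lw l12.
apply/negP => /fsubsetP h.
have : y1 \in [fset w in S | ltp w y2] by rewrite !inE y1S l12.
by move/h; rewrite !inE ltp_irr andbF.
Qed.

Lemma rank_inj S y1 y2 : y1 \in S -> y2 \in S -> rank S y1 = rank S y2 -> y1 = y2.
Proof.
move=> y1S y2S er; apply/eqP; apply/negP => /negP n12.
case/orP: (ltp_total n12) => l.
  by have := rank_mono y1S l; rewrite er ltnn.
by have := rank_mono y2S l; rewrite er ltnn.
Qed.

Definition cd (S : {fset pt}) (x : pt) : 'I_n * 'I_d :=
  (inord (rank S (par x)), fnz x).

Definition Qc_def (S : {fset pt}) : {set 'I_n * 'I_d} :=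
  [set:: [seq cd S x | x <- [seq x <- enum_fset S | x != zero d']]].
Fact Qc_key : unit. Proof. exact: tt. Qed.
Definition Qc := locked_with Qc_key Qc_def.
Lemma QcE : Qc = Qc_def. Proof. exact: unlock. Qed.

Lemma QcP S p : reflect (exists2 x, (x \in S) && (x != zero d') & p = cd S x) (p \in Qc S).
Proof.
rewrite QcE /Qc_def inE; apply: (iffP mapP) => [[x]|[x]].
  by rewrite mem_filter andbC => h ->; exists x.
by move=> h ->; exists x; rewrite // mem_filter andbC.
Qed.

Lemma zero_in (S : {fset pt}) : lower_set S -> #|` S| = n -> zero d' \in S.
Proof.
move=> lS cS.
have : (0 < #|` S|)%N by rewrite cS.
rewrite cardfs_gt0 => /fset0Pn[x xS].
by apply: (lS x xS) => i; rewrite tnth_mktuple.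
Qed.

Lemma par_in (S : {fset pt}) (x : pt) : lower_set S -> x \in S -> par x \in S.
Proof. by move=> lS xS; apply: (lS x xS) => i; apply: par_le. Qed.

Lemma rank_cd (S : {fset pt}) (x y : pt) : lower_set S -> #|` S| = n -> x \in S -> y \in S ->
  x != zero d' -> y != zero d' -> cd S x = cd S y -> x = y.
Proof.
move=> lS cS xS yS nx ny [e1 e2].
have r1 := rank_lt (par_in lS xS); have r2 := rank_lt (par_in lS yS).
rewrite cS in r1 r2.
have := congr1 (@nat_of_ord _) e1; rewrite !inordK // => /(rank_inj (par_in lS xS) (par_in lS yS)) ep.
exact: par_inj.
Qed.

Lemma step (S S' : {fset pt}) (z : pt) : lower_set S -> lower_set S' -> #|` S| = n -> #|` S'| = n ->
  Qc S = Qc S' -> z \in S -> (forall w, ltp w z -> (w \in S) = (w \in S')) ->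
  z \in S'.
Proof.
move=> lS lS' cS cS' eQ zS hz.
case: (eqVneq z (zero d')) => [->|nz]; first exact: zero_in.
have pS := par_in lS zS.
have lpz := ltp_par nz.
have pS' : par z \in S' by rewrite -hz.
have er : rank S (par z) = rank S' (par z).
  rewrite /rank; congr (#|` _|); apply/fsetP => w; rewrite !inE.
  case lw: (ltp w (par z)); last by rewrite !andbF.
  by rewrite hz // (ltp_trans lw lpz).
have : cd S z \in Qc S' by rewrite -eQ; apply/QcP; exists z; rewrite ?zS ?nz.
case/QcP => x /andP[xS' nx] [e1 e2].
have r1 := rank_lt (par_in lS' xS'); have r2 := rank_lt pS.
rewrite cS' in r1; rewrite cS in r2.
have := congr1 (@nat_of_ord _) e1; rewrite !inordK // er.
move=> /(rank_inj pS' (par_in lS' xS')) ep.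
by rewrite (par_inj nz nx ep e2).
Qed.

Lemma seq_min (s : seq pt) : s != [::] ->
  exists2 z, z \in s & forall w, w \in s -> ~~ ltp w z.
Proof.
elim: s => // a t IH _.
case: (eqVneq t [::]) => [->|nt].
  exists a; first by rewrite mem_seq1.
  by move=> w; rewrite mem_seq1 => /eqP ->; rewrite ltp_irr.
case: (IH nt) => z zt hz.
case laz: (ltp a z).
  exists a; rewrite ?mem_head // => w; rewrite in_cons => /orP[/eqP ->|wt].
    by rewrite ltp_irr.
  by apply/negP => lwa; have := hz w wt; rewrite (ltp_trans lwa laz).
exists z; first by rewrite in_cons zt orbT.
by move=> w; rewrite in_cons => /orP[/eqP ->|/hz]; rewrite ?laz.
Qed.

Lemma memE (A : {fset pt}) x : (x \in enum_fset A) = (x \in A).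
Proof. by []. Qed.

Lemma Qc_inj (S S' : {fset pt}) : lower_set S -> lower_set S' -> #|` S| = n -> #|` S'| = n ->
  Qc S = Qc S' -> S = S'.
Proof.
move=> lS lS' cS cS' eQ.
apply/eqP; apply/negP => /negP nSS.
pose D := enum_fset ((S `\` S') `|` (S' `\` S)).
have nD : D != [::].
  apply/eqP => eD; case/eqP: nSS; apply/fsetP => x.
  have : x \notin D by rewrite eD.
  rewrite /D memE !inE.
  by case: (x \in S); case: (x \in S').
case: (seq_min nD) => z zD hz.
have hw : forall w, ltp w z -> (w \in S) = (w \in S').
  move=> w lw.
  have : w \notin D by apply/negP => /hz; rewrite lw.
  rewrite /D memE !inE.
  by case: (w \in S); case: (w \in S').
move: zD; rewrite /D memE !inE => /orP[/andP[zS' zS]|/andP[nzS zS']].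
  by move: zS'; rewrite (step lS lS' cS cS' eQ zS hw).
have hw' : forall w, ltp w z -> (w \in S') = (w \in S) by move=> w /hw ->.
by move: nzS; rewrite (step lS' lS cS' cS (esym eQ) zS' hw').
Qed.

End Code.

Section Props.
Variables d' n' : nat.
Local Notation d := d'.+1.
Local Notation n := n'.+1.
Local Notation pt := (point d).
Local Open Scope fset_scope.

Definition unitp (i : 'I_d) : pt := [tuple nat_of_bool (j == i) | j < d].

Lemma unitp_nz i : unitp i != zero d'.
Proof. by apply/eqP => /(congr1 (fun t => tnth t i)); rewrite !tnth_mktuple eqxx. Qed.

Lemma fnz_unitp i : fnz (unitp i) = i.
Proof.
have := fnzP (unitp_nz i); rewrite tnth_mktuple.
by case: (fnz (unitp i) =P i).
Qed.

Lemma par_unitp i : par (unitp i) = zero d'.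
Proof.
apply: eq_from_tnth => j; rewrite !tnth_mktuple fnz_unitp.
by case: (j == i).
Qed.

Lemma Qc_row0 (S : {fset pt}) p : lower_set S -> #|` S| = n ->
  p \in Qc n' S -> (ord0, p.2) \in Qc n' S.
Proof.
move=> lS cS /QcP[x /andP[xS nx] ->] /=.
apply/QcP; exists (unitp (fnz x)).
  rewrite unitp_nz andbT; apply: (lS x xS) => j; rewrite tnth_mktuple.
  case: eqP => [->|_] //; by rewrite lt0n fnzP.
rewrite /cd par_unitp rank_zero fnz_unitp; congr (_, _).
by apply: val_inj; rewrite /= inordK.
Qed.

Lemma Qc_card (S : {fset pt}) : lower_set S -> #|` S| = n -> #|Qc n' S| = n'.
Proof.
move=> lS cS; rewrite QcE /Qc_def cardsE.
set s := [seq x <- enum_fset S | x != zero d'].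
have us : uniq s by rewrite filter_uniq // fset_uniq.
have um : uniq [seq cd n' S x | x <- s].
  rewrite map_inj_in_uniq // => x y; rewrite !mem_filter => /andP[nx xS] /andP[ny yS].
  exact: rank_cd.
rewrite (card_uniqP um) size_map size_filter.
have := count_predC (pred1 (zero d')) (enum_fset S).
rewrite count_uniq_mem ?fset_uniq // memE (zero_in lS cS).
have -> : size (enum_fset S) = n by rewrite -cS.
move=> h; rewrite -[n']/(n.-1) -h add1n /=.
by apply: eq_count => x.
Qed.

End Props.


Section Codes.
Variables d' n' : nat.
Local Notation d := d'.+1.
Local Notation n := n'.+1.
Local Notation pt := (point d).
Local Open Scope fset_scope.

Definition Jc (S : {fset pt}) : {set 'I_d} := [set i | (ord0, i) \in Qc n' S].
Definition Rc (S : {fset pt}) : {set 'I_n * 'I_d} := [set p in Qc n' S | p.1 != ord0].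
Definition code (S : {fset pt}) := (Jc S, Rc S).
Definition Ccode : {set {set 'I_d} * {set 'I_n * 'I_d}} :=
  [set c : {set 'I_d} * {set 'I_n * 'I_d} | (c.2 \subset setX [set: 'I_n] c.1) && (addn #|c.1| #|c.2| == n')].

Lemma Qc_rebuild (S : {fset pt}) :
  Qc n' S = [set p | if p.1 == ord0 then p.2 \in Jc S else p \in Rc S].
Proof.
apply/setP => -[a b]; rewrite !inE /=.
by case: eqP => [->|_] //=; rewrite andbT.
Qed.

Lemma code_inj (S S' : {fset pt}) : lower_set S -> lower_set S' -> #|` S| = n -> #|` S'| = n ->
  code S = code S' -> S = S'.
Proof.
move=> lS lS' cS cS' [eJ eR]; apply: (Qc_inj lS lS' cS cS').
by rewrite !Qc_rebuild eJ eR.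
Qed.

Lemma code_in (S : {fset pt}) : lower_set S -> #|` S| = n -> code S \in Ccode.
Proof.
move=> lS cS; rewrite inE /=; apply/andP; split.
  apply/subsetP => p; rewrite [p \in Rc S]inE => /andP[pQ _].
  by case: p pQ => a b pQ; rewrite in_setX in_setT /= [_ \in Jc S]inE (Qc_row0 lS cS pQ).
apply/eqP; transitivity #|Qc n' S|; last exact: Qc_card lS cS.
rewrite -(cardID [pred p : 'I_n * 'I_d | p.1 == ord0] (Qc n' S)).
congr addn.
  rewrite -(card_imset _ (fun i j (e : (ord0 : 'I_n, i) = (ord0, j)) => congr1 snd e)).
  apply: eq_card => -[a b]; rewrite !inE /=.
  apply/imsetP/andP => [[i iJ [-> ->]]|[pQ /eqP ea]].
    by move: iJ; rewrite inE => ->.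
  by exists b; rewrite ?inE -?ea.
by apply: eq_card => p; rewrite !inE andbC.
Qed.

End Codes.

Section Enum.
Variables d' n' : nat.
Local Notation d := d'.+1.
Local Notation n := n'.+1.
Local Notation pt := (point d).
Local Open Scope fset_scope.

Definition Bset : {fset pt} :=
  [fset x in [seq (map_tuple (@nat_of_ord n) t : pt) | t : d.-tuple 'I_n <- enum {: d.-tuple 'I_n}]].

Lemma in_Bset (x : pt) : (forall i, tnth x i < n) -> x \in Bset.
Proof.
move=> hx; rewrite /Bset inE /=.
apply/mapP; exists [tuple inord (tnth x i) | i < d]; first by rewrite mem_enum.
apply: eq_from_tnth => i; rewrite tnth_map tnth_mktuple inordK //.
Qed.

Definition sc (i : 'I_d) (c : nat) : pt := [tuple (if j == i then c else 0) | j < d].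

Lemma coord_bound (S : {fset pt}) x i : lower_set S -> x \in S -> #|` S| = n -> tnth x i < n.
Proof.
move=> lS xS cS.
set v := tnth x i.
pose A := [fset y in map (sc i) (iota 0 v.+1)].
have sub : A `<=` S.
  apply/fsubsetP => y; rewrite in_fset => /mapP[c]; rewrite mem_iota add0n => /andP[_ hc] ->.
  apply: (lS x xS) => j; rewrite tnth_mktuple; case: eqP => [->|_] //.
have := fsubset_leq_card sub; rewrite cS card_fseq undup_id.
  by rewrite size_map size_iota.
rewrite map_inj_uniq ?iota_uniq // => c1 c2 /(congr1 (fun t => tnth t i)).
by rewrite !tnth_mktuple eqxx.
Qed.

Lemma memG (T : choiceType) (A : {fset T}) x : (x \in enum_fset A) = (x \in A).
Proof. by []. Qed.

Definition lb (S : {fset pt}) : bool :=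
  if excluded_middle_informative (lower_set S) then true else false.

Lemma lbP S : lb S <-> lower_set S.
Proof. by rewrite /lb; case: excluded_middle_informative. Qed.

Definition sq : seq {fset pt} :=
  [seq S <- enum_fset (fpowerset Bset) | lb S && (#|` S| == n)].

Lemma comb : is_pd d n (size sq) /\ size sq <= #|Ccode d' n'|.
Proof.
split.
  exists sq; split => //.
    by rewrite filter_uniq // fset_uniq.
  move=> S; rewrite mem_filter memG fpowersetE; split.
    by case/andP => /andP[/lbP lS /eqP cS] _.
  case=> lS cS; rewrite cS eqxx andbT; apply/andP; split; first exact/lbP.
  apply/fsubsetP => x xS; apply: in_Bset => i; exact: coord_bound lS xS cS.
have um : uniq (map (@code d' n') sq).
  rewrite map_inj_in_uniq ?filter_uniq ?fset_uniq // => S S'.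
  rewrite !mem_filter => /andP[/andP[/lbP lS /eqP cS] _] /andP[/andP[/lbP lS' /eqP cS'] _].
  exact: code_inj.
have := uniq_leq_size um (s2 := enum (Ccode d' n')).
rewrite size_map -cardE; apply => c /mapP[S]; rewrite mem_filter mem_enum.
by move=> /andP[/andP[/lbP lS /eqP cS] _] ->; apply: code_in.
Qed.

End Enum.



Lemma expn_mono a b m : a <= b -> a ^ m <= b ^ m.
Proof. by move=> ab; elim: m => // m IH; rewrite !expnS leq_mul. Qed.

Lemma ffact_le_exp a m : a ^_ m <= a ^ m.
Proof.
elim: m a => // m IH a; rewrite ffactnS expnS leq_mul //.
exact: leq_trans (IH _) (expn_mono _ (leq_pred a)).
Qed.

Lemma ext_sum (f : nat -> nat) a b : (forall j, a <= j -> f j = 0) -> a <= b ->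
  \sum_(j < a) f j = \sum_(j < b) f j.
Proof.
move=> h ab; rewrite -!(big_mkord xpredT) (big_cat_nat (leq0n a) ab) /=.
by rewrite [X in _ + X]big1_seq ?addn0 // => j /andP[_]; rewrite mem_iota => /andP[aj _]; apply: h.
Qed.

Section Count.
Variables d' n' : nat.
Local Notation d := d'.+1.
Local Notation n := n'.+1.

Definition Cc : {set {set 'I_d} * {set 'I_n * 'I_d}} :=
  [set c : {set 'I_d} * {set 'I_n * 'I_d} | (c.2 \subset setX [set: 'I_n] c.1) && (addn #|c.1| #|c.2| == n')].

Definition g (j : nat) := if j <= n' then 'C(n * j, n' - j) else 0.

Lemma card_Cc1 : #|Cc| = \sum_(J : {set 'I_d}) g #|J|.
Proof.
rewrite -sum1_card.
have -> : \sum_(c in Cc) 1 = \sum_(J : {set 'I_d}) \sum_(R : {set 'I_n * 'I_d}) (if (J, R) \in Cc then 1 else 0).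
  by rewrite pair_big /= big_mkcond; apply: eq_bigr => -[J R] _.
apply: eq_bigr => J _.
rewrite -big_mkcond /= sum1_card /g.
case: leqP => hJ.
  have eX : #|setX [set: 'I_n] J| = n * #|J| by rewrite cardsX cardsT card_ord.
  rewrite -eX -cards_draws.
  apply: eq_card => R; rewrite [in RHS]inE /= -[R \in _]/((J, R) \in Cc) inE /=.
  congr (_ && _); apply/eqP/eqP => e.
    by apply/eqP; rewrite -(eqn_add2l #|J|) e subnKC.
  by rewrite e subnKC.
apply: eq_card0 => R; rewrite -[R \in _]/((J, R) \in Cc) inE /=.
apply/negP => /andP[_ /eqP e]; move: hJ; rewrite ltnNge; apply/negP; apply/negPn; rewrite -e leq_addr.
by [].
Qed.

Lemma card_Cc2 : #|Cc| = \sum_(j < d.+1) 'C(d, j) * g j.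
Proof.
rewrite card_Cc1 (partition_big (fun J : {set 'I_d} => (inord #|J| : 'I_d.+1)) xpredT) //=.
apply: eq_bigr => j _.
have hJ : forall J : {set 'I_d}, (inord #|J| == j :> 'I_d.+1) = (#|J| == j).
  move=> J; rewrite -val_eqE /= inordK // ltnS.
  by have := max_card J; rewrite card_ord.
rewrite (eq_bigl (fun J : {set 'I_d} => #|J| == j)) //.
rewrite (eq_bigr (fun _ => g j)); last by move=> J /eqP ->.
rewrite sum_nat_const; congr (_ * _).
have e := card_draws 'I_d j; rewrite card_ord in e; rewrite -e; apply: eq_card => J; rewrite inE.
by [].
Qed.

Lemma count_C : n'`! * #|Cc| <= (n * n + d) ^ n'.
Proof.
rewrite card_Cc2 big_distrr /=.
pose U j := 'C(n', j) * ((n * n) ^ (n' - j) * d ^_ j).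
apply: (@leq_trans (\sum_(j < d.+1) U j)).
  apply: leq_sum => j _; rewrite /U /g; case: (leqP j n') => hj /=; last by rewrite !muln0.
  have e1 : n'`! * ('C(d, j) * 'C(n * j, n' - j)) =
     'C(n', j) * (('C(n * j, n' - j) * (n' - j)`!) * ('C(d, j) * j`!)).
    rewrite -(bin_fact hj).
    set a := 'C(n', j); set b := j`!; set c := (n' - j)`!; set x := 'C(d, j); set y := 'C(n * j, n' - j).
    nia.
  rewrite e1 !bin_ffact leq_mul // leq_mul //.
  rewrite (leq_trans (ffact_le_exp _ _)) // expn_mono // leq_mul //.
  by rewrite (leq_trans hj).
rewrite (@ext_sum U d.+1 (d.+1 + n)); first last.
- exact: leq_addr.
- by move=> j hj; rewrite /U ffact_small ?muln0.
rewrite -(@ext_sum U n (d.+1 + n)); first last.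
- exact: leq_addl.
- by move=> j hj; rewrite /U bin_small.
rewrite expnDn leq_sum // => j _; rewrite /U leq_mul // leq_mul //.
exact: ffact_le_exp.
Qed.

End Count.



Lemma INR_mul a b : INR (a * b) = (INR a * INR b)%R.
Proof. exact: mult_INR. Qed.

Lemma INR_add a b : INR (a + b) = (INR a + INR b)%R.
Proof. exact: plus_INR. Qed.

Lemma INR_exp a m : INR (a ^ m) = (INR a ^ m)%R.
Proof. elim: m => [|m IH] //=; by rewrite expnS INR_mul IH. Qed.

Lemma INR_fact n : INR (n.+1)`! = (INR n.+1 * INR n`!)%R.
Proof. by rewrite factS INR_mul. Qed.

Lemma exp_pow_nat x m : (exp x ^ m = exp (INR m * x))%R.
Proof.
elim: m => [|m IH]; first by rewrite /= Rmult_0_l exp_0.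
change (exp x ^ m.+1)%R with (exp x * exp x ^ m)%R.
rewrite IH -exp_plus S_INR; congr exp; lra.
Qed.

Lemma fact_bound n : (INR n ^ n <= INR n`! * exp (INR n))%R.
Proof.
elim: n => [|n IH]; first by rewrite /= exp_0; lra.
have hb : (INR n.+1 ^ n <= INR n ^ n * exp 1)%R.
  case: n IH => [|n] IH; first by rewrite /=; have := exp_ineq1_le 1; lra.
  have Np : (0 < INR n.+1)%R by apply: lt_0_INR; apply/ltP.
  have e1 : (INR n.+2 = INR n.+1 * (1 + / INR n.+1))%R.
    rewrite [in LHS]S_INR; field; lra.
  rewrite e1 Rpow_mult_distr.
  apply: Rmult_le_compat_l; first by apply: pow_le; lra.
  apply: (Rle_trans _ (exp (/ INR n.+1) ^ n.+1)).
    apply: pow_incr; split; first by have := Rinv_0_lt_compat _ Np; lra.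
    exact: exp_ineq1_le.
  rewrite exp_pow_nat; right; congr exp; field; lra.
rewrite INR_fact.
change (INR n.+1 ^ n.+1)%R with (INR n.+1 * INR n.+1 ^ n)%R.
rewrite [in exp (INR n.+1)]S_INR exp_plus.
have h0 : (0 <= INR n)%R by apply: pos_INR.
have h5 : (0 <= INR n`!)%R by apply: pos_INR.
have h6 : (0 < exp (INR n))%R by apply: exp_pos.
have h1 : (0 <= INR n.+1)%R by apply: pos_INR.
have h2 : (0 < exp 1)%R by apply: exp_pos.
have h3 : (0 <= INR n.+1 ^ n)%R by apply: pow_le.
have h4 : (0 <= INR n ^ n)%R by apply: pow_le.
have h7 : (INR n.+1 ^ n <= INR n`! * exp (INR n) * exp 1)%R.
  apply: (Rle_trans _ _ _ hb); apply: Rmult_le_compat_r; lra.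
have h8 := Rmult_le_compat_l _ _ _ h1 h7.
lra.
Qed.

Lemma exp_le x y : (x <= y -> exp x <= exp y)%R.
Proof.
case/Rle_lt_or_eq_dec => [h|->]; last by right.
by left; apply: exp_increasing.
Qed.

Lemma real_part (d n k : nat) (xi : R) : (0 < d)%N -> (0 < n)%N ->
  (xi >= 2 / INR n)%R -> (INR d >= xi * INR n ^ 2)%R ->
  n.-1`! * k <= expn (n * n + d) n.-1 ->
  (INR k < 3 * (Rmax (2 * exp (35 / 10) / xi) 1) ^ (2 * n)
               * exp (125 * INR n / xi) * INR n ^ 2 * exp (INR n)
               * (INR d ^ n / INR n ^ n))%R.
Proof.
case: n => // m d0 _ hxi hd hk.
rewrite /= in hk.
set N := INR m.+1 in hxi hd *.
set D := INR d in hd *.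
have N1 : (1 <= N)%R by rewrite /N S_INR; have := pos_INR m; lra.
have D1 : (1 <= D)%R by rewrite /D; apply: (le_INR 1); apply/leP.
have xip : (0 < xi)%R.
  apply: (Rlt_le_trans _ (2 / N)); last lra.
  apply: Rdiv_lt_0_compat; lra.
have MN : (INR m <= N)%R by rewrite /N S_INR; lra.
have M0 : (0 <= INR m)%R by apply: pos_INR.
set F := INR m`!.
have F0 : (0 < F)%R by apply: lt_0_INR; apply/ltP; apply: fact_gt0.
set X := (D ^ m * exp (N / xi))%R.
have hKF : (F * INR k <= X)%R.
  have := le_INR _ _ (elimT leP hk); rewrite INR_mul INR_exp INR_add INR_mul -/N -/D -/F => h1.
  apply: (Rle_trans _ _ _ h1).
  have h2 : (N * N + D <= D * exp (N * N / D))%R.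
    have := exp_ineq1_le (N * N / D).
    have e : (D * (1 + N * N / D) = N * N + D)%R by field; lra.
    move=> h; rewrite -e; apply: Rmult_le_compat_l; lra.
  apply: (Rle_trans _ ((D * exp (N * N / D)) ^ m)).
    apply: pow_incr; split; [nra|exact: h2].
  rewrite Rpow_mult_distr exp_pow_nat /X.
  apply: Rmult_le_compat_l; first by apply: pow_le; lra.
  apply: exp_le.
  have h3 : (N * N / D <= / xi)%R.
    have hN2 : (N ^ 2 = N * N)%R by ring.
    rewrite hN2 in hd.
    have hxN : (0 < xi * (N * N))%R by apply: Rmult_lt_0_compat; nra.
    apply: (Rle_trans _ (N * N / (xi * (N * N)))).
      rewrite /Rdiv; apply: Rmult_le_compat_l; first nra.
      apply: Rinv_le_contravar => //; lra.
    right; field; lra.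
  have h4 : (0 <= N * N / D)%R by apply: Rmult_le_pos; [nra| left; apply: Rinv_0_lt_compat; lra].
  rewrite /Rdiv; apply: (Rle_trans _ (N * (N * N * / D))); first by apply: Rmult_le_compat_r.
  apply: Rmult_le_compat_l; lra.
have hP : (N ^ m.+1 <= N * F * exp N)%R.
  have := fact_bound m.+1; rewrite INR_fact -/N -/F; lra.
set A := Rmax (2 * exp (35 / 10) / xi) 1.
have A1 : (1 <= A ^ (2 * m.+1))%R by apply: pow_R1_Rle; apply: Rmax_r.
set E := exp (125 * N / xi).
have XE : (exp (N / xi) <= E)%R.
  apply: exp_le; rewrite /Rdiv; apply: Rmult_le_compat_r.
    by left; apply: Rinv_0_lt_compat.
  lra.
have P0 : (0 < N ^ m.+1)%R by apply: pow_lt; lra.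
have Dm : (0 < D ^ m)%R by apply: pow_lt; lra.
have eN : (0 < exp N)%R by apply: exp_pos.
have e0 : (0 < exp (N / xi))%R by apply: exp_pos.
have K0 : (0 <= INR k)%R by apply: pos_INR.
have hKP : (INR k * N ^ m.+1 <= X * N * exp N)%R.
  apply: (Rmult_le_reg_l F) => //.
  apply: (Rle_trans _ (X * (N * F * exp N))).
    rewrite -Rmult_assoc; apply: Rmult_le_compat => //; nra.
  right; ring.
have hR : (X * N * exp N < 3 * A ^ (2 * m.+1) * E * N ^ 2 * exp N * D ^ m.+1)%R.
  rewrite /X.
  change (D ^ m.+1)%R with (D * D ^ m)%R.
  have g1 : (D ^ m * exp (N / xi) * N <= D ^ m * E * N)%R.
    apply: Rmult_le_compat_r; first lra.
    apply: Rmult_le_compat_l; lra.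
  have g2 : (D ^ m * E * N < 3 * A ^ (2 * m.+1) * E * N ^ 2 * D * D ^ m)%R.
    have E0 : (0 < E)%R by apply: exp_pos.
    have : (N <= N ^ 2)%R by rewrite /=; nra.
    have : (1 * 1 <= A ^ (2 * m.+1) * D)%R by apply: Rmult_le_compat; lra.
    move=> h5 h6.
    have h7 : (0 < D ^ m * E * N)%R by apply: Rmult_lt_0_compat; [apply: Rmult_lt_0_compat|]; lra.
    have h8 : (D ^ m * E * N <= A ^ (2 * m.+1) * D * (D ^ m * E * N ^ 2))%R.
      rewrite -[X in (X <= _)%R]Rmult_1_l.
      apply: Rmult_le_compat; try lra.
      apply: Rmult_le_compat_l; first by apply: Rmult_le_pos; lra.
      exact: h6.
    nra.
  have := Rmult_le_compat_r _ _ _ (Rlt_le _ _ eN) g1.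
  have := Rmult_lt_compat_r _ _ _ eN g2.
  move=> h9 h10; apply: (Rle_lt_trans _ _ _ h10).
  apply: (Rlt_le_trans _ _ _ h9); right; ring.
have := Rle_lt_trans _ _ _ hKP hR => hfin.
apply: (Rmult_lt_reg_r (N ^ m.+1)) => //.
apply: (Rlt_le_trans _ _ _ hfin); right.
rewrite /Rdiv; field; lra.
Qed.


Theorem proposition4 (d n : nat) (xi : R) :
  (0 < d)%nat -> (0 < n)%nat ->
  (xi >= 2 / INR n)%R ->
  (INR d >= xi * INR n ^ 2)%R ->
  exists k : nat, is_pd d n k /\
    (INR k < 3 * (Rmax (2 * exp (35 / 10) / xi) 1) ^ (2 * n)
               * exp (125 * INR n / xi) * INR n ^ 2 * exp (INR n)
               * (INR d ^ n / INR n ^ n))%R.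
Proof.
move=> d0 n0 hxi hd.
case: d d0 hd => // d' _ hd.
case: n n0 hxi hd => // n' _ hxi hd.
have [hpd hC] := comb d' n'.
exists (size (sq d' n')); split => //.
apply: real_part => //.
have hc := count_C d' n'.
have eC : Ccode d' n' = Cc d' n' by [].
rewrite eC in hC.
apply: leq_trans hc; rewrite /=.
by rewrite leq_mul.
Qed.
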